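(* Let $G$ be a graph in which every edge has even multiplicity, i.e. for every pair of distinct vertices $u,v$ the number of edges joining $u$ and $v$ is even. Let $\mathcal D$ be a decomposition of $G$ into cycles, and let $C\in\mathcal D$. Then $$|\mathcal D|\le \frac{|E(G)|}{2}-|E(C)|+2.$$
   Context: Graphs may have multiple edges but no loops. For $m\ge2$, an $m$-cycle is a cycle with $m$ edges; a $2$-cycle consists of two parallel edges. A cycle decomposition of $G$ is a set of cycles in $G$ whose edge sets partition $E(G)$. *)

(* Defs.v *)
From mathcomp Require Import all_boot.
Set Implicit Arguments. Unset Strict Implicit. Unset Printing Implicit Defensive.

(* Parallel edges are distinct elements of E with the same endpoints. *)
Section MultiGraph.
Variables (V E : finType) (ends : E -> V * V).

Definition loopless : Prop := forall e : E, (ends e).1 != (ends e).2.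

Definition joins (e : E) (u v : V) : bool :=
  (ends e == (u, v)) || (ends e == (v, u)).

Definition mult (u v : V) : nat := #|[set e : E | joins e u v]|.

Definition even_multiplicity : Prop :=
  forall u v : V, u != v -> ~~ odd (mult u v).

Definition is_cycle (C : {set E}) : Prop :=
  exists (m : nat) (vs : 'I_m -> V) (es : 'I_m -> E),
    [/\ 1 < m, injective vs, injective es,
        C = [set es i | i in 'I_m] &
        forall i : 'I_m, joins (es i) (vs i) (vs (ordS i))].

Definition cycle_decomposition (D : {set {set E}}) : Prop :=
  (forall C, C \in D -> is_cycle C) /\ partition D [set: E].

End MultiGraph.

(* Main.v *)
Require Import Defs.
From mathcomp Require Import all_boot.
From mathcomp Require Import zify.
Set Implicit Arguments. Unset Strict Implicit. Unset Printing Implicit Defensive.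

Section Aux.
Variables (V E : finType) (ends : E -> V * V).
Hypothesis Hloop : loopless ends.

Definition key (e : E) : {set V} := [set (ends e).1; (ends e).2].

Lemma inkey w e : (w \in key e) = (w == (ends e).1) || (w == (ends e).2).
Proof. by rewrite !inE. Qed.

Lemma joins_key e u v : joins ends e u v -> key e = [set u; v].
Proof.
rewrite /joins /key => /orP[] /eqP ->; first by [].
by rewrite setUC.
Qed.

Lemma set2_eq (a b u v : V) : a != b -> [set a; b] = [set u; v] ->
  ((a, b) == (u, v)) || ((a, b) == (v, u)).
Proof.
move=> ab E1.
have ha : a \in [set u; v] by rewrite -E1 set21.
have hb : b \in [set u; v] by rewrite -E1 set22.
have hu : u \in [set a; b] by rewrite E1 set21.
have hv : v \in [set a; b] by rewrite E1 set22.
move: ha hb hu hv; rewrite !in_set2.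
by case/orP=> /eqP ? ; case/orP=> /eqP ?; subst => //=; rewrite ?eqxx ?orbT //=;
  move: ab; rewrite ?eqxx //= => ab; case/orP => /eqP ?; subst; rewrite ?eqxx ?orbT // in ab *.
Qed.

Lemma key_joins e u v : key e = [set u; v] -> joins ends e u v.
Proof.
move=> h; rewrite /joins.
have := set2_eq (Hloop e) h.
by case: (ends e) => a b /=.
Qed.

Hypothesis Heven : even_multiplicity ends.

Definition cls (e : E) := [set f | key f == key e].

Lemma even_cls e : ~~ odd #|cls e|.
Proof.
have := Heven (Hloop e); rewrite /mult.
have -> : [set f | joins ends f (ends e).1 (ends e).2] = cls e; last by [].
apply/setP => f; rewrite !inE; apply/idP/idP.
  by move/joins_key => ->.
by move/eqP/key_joins.
Qed.

Lemma sigma_gen n (A : {set E}) : #|A| <= n ->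
  (forall e, e \in A -> ~~ odd #|A :&: cls e|) ->
  exists s : E -> E, [/\ involutive s,
     forall e, e \in A -> (s e != e) && (s e \in A),
     forall e, key (s e) = key e & forall e, e \notin A -> s e = e].
Proof.
elim: n A => [|n IH] A hA hev.
  have A0 : A = set0 by apply/eqP; rewrite -cards_eq0 -leqn0.
  by exists id; split => // e; rewrite A0 inE.
case: (boolP (A == set0)) => [/eqP A0|/set0Pn [e eA]].
  by exists id; split => // e; rewrite A0 inE.
have : 1 < #|A :&: cls e|.
  have h1 : e \in A :&: cls e by rewrite !inE eA eqxx.
  have := hev e eA; have : 0 < #|A :&: cls e| by apply/card_gt0P; exists e.
  case: #|_| => [|[|k]] //.
move=> h2.
have [f hf] : exists f, f \in (A :&: cls e) :\ e.
  apply/set0Pn; rewrite -cards_eq0.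
  have := cardsD1 e (A :&: cls e); rewrite !inE eA eqxx /= => h; rewrite -lt0n; lia.
move: hf; rewrite !inE => /and3P[fe fA /eqP kf].
set A' := A :\ e :\ f.
have cA : #|A| = #|A'|.+2.
  by rewrite /A' (cardsD1 e A) eA (cardsD1 f (A :\ e)) !inE fe fA /=.
have [s' [s'K s'A s'k s'o]] : exists s' : E -> E, [/\ involutive s',
     forall e, e \in A' -> (s' e != e) && (s' e \in A'),
     forall e, key (s' e) = key e & forall e, e \notin A' -> s' e = e].
  apply: IH; first by move: hA; rewrite cA ltnS => /ltnW.
  move=> g; rewrite !inE => /and3P[gf ge gA].
  case: (boolP (key g == key e)) => kg.
    have -> : A' :&: cls g = (A :&: cls g) :\ e :\ f.
      by apply/setP => x; rewrite !inE; do 3 case: (_ == _) => //=.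
    have := hev g gA.
    rewrite (cardsD1 e (A :&: cls g)) (cardsD1 f ((A :&: cls g) :\ e)) !inE
      eA fA fe (eqP kg) kf eqxx /=.
    by rewrite ?add0n ?oddS ?negbK.
  have -> : A' :&: cls g = A :&: cls g.
    apply/setP => x; rewrite !inE.
    case: (boolP (x == f)) => [/eqP ->|_]; first by rewrite kf [key e == _]eq_sym (negbTE kg) !andbF.
    case: (boolP (x == e)) => [/eqP ->|_] //=; by rewrite [key e == _]eq_sym (negbTE kg) !andbF.
  exact: hev.
have s'e : s' e = e by apply: s'o; rewrite !inE eqxx andbF.
have s'f : s' f = f by apply: s'o; rewrite !inE eqxx.
exists (fun x => if x == e then f else if x == f then e else s' x); split.
- move=> x /=; case: (boolP (x == e)) => [/eqP ->|xe]; first by rewrite eqxx (negbTE fe).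
  case: (boolP (x == f)) => [/eqP ->|xf]; first by rewrite eqxx.
  case: (boolP (x \in A')) => xA.
    have /andP[_ ] := s'A x xA; rewrite !inE => /and3P[hx1 hx2 _].
    by rewrite (negbTE hx1) (negbTE hx2) s'K.
  by rewrite s'o // (negbTE xe) (negbTE xf) s'o.
- move=> x xA; case: (boolP (x == e)) => [/eqP ->|xe]; first by rewrite fe fA.
  case: (boolP (x == f)) => [/eqP ->|xf]; first by rewrite eA eq_sym fe.
  have xA' : x \in A' by rewrite !inE xe xf xA.
  have /andP[-> ] := s'A x xA'; by rewrite !inE => /and3P[].
- move=> x /=; case: (boolP (x == e)) => [/eqP ->|_]; first by rewrite kf.
  case: (boolP (x == f)) => [/eqP ->|_]; [by rewrite kf | exact: s'k].
- move=> x xA; have xe : x != e by apply: contraNneq xA => ->.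
  have xf : x != f by apply: contraNneq xA => ->.
  by rewrite (negbTE xe) (negbTE xf) s'o // !inE (negbTE xA) !andbF.
Qed.

Lemma sigma_exists : exists s : E -> E,
  [/\ involutive s, forall e, s e != e & forall e, key (s e) = key e].
Proof.
have [s [sK sA sk _]] : exists s : E -> E, [/\ involutive s,
     forall e, e \in [set: E] -> (s e != e) && (s e \in [set: E]),
     forall e, key (s e) = key e & forall e, e \notin [set: E] -> s e = e].
  by apply: (@sigma_gen #|[set: E]|) => // e _; rewrite setTI; exact: even_cls.
exists s; split => // e; by have /andP[] := sA e (in_setT e).
Qed.

End Aux.

Lemma ordS_val k (a : 'I_k) : nat_of_ord (ordS a) = if a.+1 == k then 0 else a.+1.
Proof.
rewrite /=; have := ltn_ord a; case: eqP => [->|ne] h; first by rewrite modnn.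
by rewrite modn_small //; lia.
Qed.
Lemma ordS_neq k (a : 'I_k) : 1 < k -> ordS a != a.
Proof. move=> hk; apply/eqP => /(congr1 (@nat_of_ord _)); rewrite ordS_val; have := ltn_ord a.
case: (a.+1 == k) / eqP; lia. Qed.
Lemma ordSS_neq k (a : 'I_k) : 2 < k -> ordS (ordS a) != a.
Proof. move=> hk; apply/eqP => /(congr1 (@nat_of_ord _)); rewrite !ordS_val; have := ltn_ord a.
case: (a.+1 == k) / eqP => h1; rewrite ?h1 /=; case: (_ == k) / eqP; lia. Qed.
Lemma iter_ordS k (i0 : 'I_k) n : nat_of_ord i0 = 0 -> nat_of_ord (iter n (@ordS k) i0) = n %% k.
Proof. move=> h0; elim: n => [|n IH]; first by rewrite /= h0 mod0n.
rewrite iterS ordS_val IH. have kp : 0 < k by case: k i0 {IH h0} => [[]|].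
have e : n.+1 %% k = (n %% k + 1) %% k by rewrite modnDml addn1.
case: eqP => h; rewrite e.
  by rewrite addn1 h modnn.
rewrite (@modn_small (n %% k + 1)) ?addn1 //. have := ltn_pmod n kp. move: h; move: (n %% k) => r. lia. Qed.

Lemma arith1 a b c : 2 * b <= a + 2 -> 1 + (1 + a) <= c -> 2 * (1 + b) <= c + 2.
Proof. lia. Qed.

Lemma arith2 r1 r2 S LS cS m : 2 * r1 <= r2 -> LS + m <= cS -> 2 * S <= LS + 2 ->
  2 * (S + (1 + r1)) + 2 * m <= cS + (m + r2) + 4.
Proof. lia. Qed.

Lemma arith3 m a b : m <= 2 -> 2 * a <= b -> 2 * a + 2 * m <= b + 4.
Proof. lia. Qed.

Section Main.
Variables (V E : finType) (ends : E -> V * V).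
Variable D : {set {set E}}.
Hypothesis HDc : forall B, B \in D -> is_cycle ends B.
Hypothesis HDp : partition D [set: E].
Variable s : E -> E.
Hypotheses (sK : involutive s) (sF : forall e, s e != e)
  (sk : forall e, key ends (s e) = key ends e).

Let Xw (w : V) := [set x | w \in key ends x].

Lemma covD : cover D = [set: E].
Proof. by case/and3P: HDp => /eqP. Qed.
Lemma tD : trivIset D.
Proof. by case/and3P: HDp. Qed.
Lemma n0D : set0 \notin D.
Proof. by case/and3P: HDp. Qed.

Lemma cycle_card B : is_cycle ends B -> 1 < #|B|.
Proof.
case=> k [vs [es [k1 vinj einj -> _]]].
by rewrite card_imset // card_ord.
Qed.

Lemma card_cover (S : {set {set E}}) : S \subset D -> #|cover S| = \sum_(B in S) #|B|.
Proof.
move=> sub; apply: card_partition.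
apply/and3P; split => //; first exact: (trivIsetS sub tD).
by apply: contra n0D => /(subsetP sub).
Qed.

Lemma cover_capX n (S : {set {set E}}) (X : {set E}) : #|S| <= n -> S \subset D ->
  #|cover S :&: X| = \sum_(B in S) #|B :&: X|.
Proof.
elim: n S => [|n IH] S hS sub.
  have -> : S = set0 by apply/eqP; rewrite -cards_eq0 -leqn0.
  by rewrite /cover !big_set0 set0I cards0.
case: (boolP (S == set0)) => [/eqP ->|/set0Pn [B BS]].
  by rewrite /cover !big_set0 set0I cards0.
have tS : trivIset S := trivIsetS sub tD.
have BsubS : B \subset cover S by apply: bigcup_sup.
rewrite (big_setD1 B BS) /= -(IH (S :\ B)); first last.
- by apply: subset_trans sub; apply: subsetDl.
- by move: hS; rewrite (cardsD1 B S) BS add1n ltnS.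
rewrite -(cardsID B (cover S :&: X)); congr (_ + _).
  apply: eq_card => x; rewrite !inE; case: (boolP (x \in B)) => xB; rewrite ?andbF ?andbT //.
  by rewrite (subsetP BsubS x xB).
apply: eq_card => x; rewrite (coverD1 tS BS) !inE.
by case: (x \in B); case: (x \in X); case: (x \in cover S).
Qed.

Lemma cycle_deg B w : is_cycle ends B -> ~~ odd #|B :&: Xw w|.
Proof.
case=> k [vs [es [k1 vinj einj -> hj]]].
have -> : [set es i | i in 'I_k] :&: Xw w = es @: [set j | w \in key ends (es j)].
  apply/setP => x; rewrite !inE; apply/andP/imsetP => [[/imsetP [j _ ->] hw]|[j]].
    by exists j; rewrite ?inE.
  rewrite inE => hw ->; split; first by apply/imsetP; exists j.
  by move: hw; rewrite !inE.
rewrite card_imset //.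
case: (boolP [exists a, vs a == w]) => [/existsP [a /eqP aw]|].
  have -> : [set j | w \in key ends (es j)] = [set a; ord_pred a].
    apply/setP => j; rewrite in_set (joins_key (hj j)) !inE -aw !(inj_eq vinj).
    congr (_ || _); first by rewrite eq_sym.
    apply/eqP/eqP => [->|->]; first by rewrite ordSK.
    by rewrite ord_predK.
  rewrite cards2.
  have : a != ord_pred a.
    apply/eqP => h; have := ordS_neq a k1; by rewrite {1}h ord_predK eqxx.
  by move=> ->.
move=> /existsPn nw.
have -> : [set j | w \in key ends (es j)] = set0.
  apply/setP => j; rewrite in_set (joins_key (hj j)) !inE.
  by rewrite ![w == _]eq_sym (negbTE (nw j)) (negbTE (nw (ordS j))).
by rewrite cards0.
Qed.

Lemma deg_even (S : {set {set E}}) w : S \subset D -> ~~ odd #|cover S :&: Xw w|.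
Proof.
move=> sub; rewrite (@cover_capX #|S|) //.
apply: (big_ind (fun n => ~~ odd n)) => //.
  by move=> a b ha hb; rewrite oddD (negbTE ha) (negbTE hb).
by move=> B BS; apply: cycle_deg; apply: HDc; apply: (subsetP sub).
Qed.

Lemma even_inv (X : {set E}) : (forall x, x \in X -> s x \in X) -> ~~ odd #|X|.
Proof.
move=> hX.
pose H := [set x in X | (enum_rank x < enum_rank (s x))%N].
have sinj : injective s := can_inj sK.
have eX : X = H :|: s @: H.
  apply/setP => x; rewrite !inE; apply/idP/idP.
    move=> xX; rewrite xX /=; case: ltnP => //= hl.
    apply/imsetP; exists (s x); last by rewrite sK.
    rewrite inE hX //= sK ltn_neqAle hl andbT.
    by apply/eqP => /val_inj /enum_rank_inj /eqP; rewrite (negbTE (sF x)).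
  case/orP => [/andP[]//|/imsetP [y]]; rewrite inE => /andP[yX _] ->.
  exact: hX.
have dj : H :&: s @: H = set0.
  apply/setP => x; rewrite !inE; apply/negbTE; apply/negP => /andP[/andP[_ h1]].
  case/imsetP => y; rewrite inE => /andP[_ h2] exy.
  move: h1; rewrite exy sK => h1.
  by have := ltn_trans h1 h2; rewrite ltnn.
rewrite eX cardsU dj cards0 subn0 card_imset //.
by rewrite addnn odd_double.
Qed.

Variable C : {set E}.
Hypothesis HC : C \in D.

Let Dp := D :\ C.

Lemma notC (S : {set {set E}}) x : S \subset Dp -> x \in cover S -> x \notin C.
Proof.
move=> sub /bigcupP [B BS xB].
have := subsetP sub B BS; rewrite !inE => /andP [BC BD].
have := (@trivIsetP _ D tD) B C BD HC BC.
by move/disjointFr => ->.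
Qed.

Definition LS (S : {set {set E}}) := [set x in cover S | s x \in cover S].
Definition closedb (S : {set {set E}}) :=
  [forall x, ((x \in cover S) && (s x \notin C)) ==> (s x \in cover S)].

Lemma cover_sub (S S' : {set {set E}}) : S \subset S' -> cover S \subset cover S'.
Proof.
move=> h; apply/subsetP => x /bigcupP [B hB hx]; apply/bigcupP; exists B => //.
exact: (subsetP h).
Qed.

Lemma grow n : forall S : {set {set E}}, #|~: S| <= n -> S \subset Dp ->
  2 * #|S| <= #|LS S| + 2 ->
  exists S' : {set {set E}}, [/\ S \subset S', S' \subset Dp, closedb S' & 2 * #|S'| <= #|LS S'| + 2].
Proof.
elim: n => [|n IH] S hn sub hI; case: (boolP (closedb S)) => hc;
  try by exists S.
all: move/forallPn: hc => [x]; rewrite negb_imply => /andP [/andP [xS sxC] sxS].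
all: have sxD : s x \in cover D by rewrite covD inE.
all: set B := pblock D (s x).
all: have BD : B \in D by apply: pblock_mem.
all: have sxB : s x \in B by rewrite mem_pblock.
all: have BS : B \notin S.
all: try by apply: contra sxS => BS; apply/bigcupP; exists B.
all: have BC : B != C by apply: contraNneq sxC => <-.
  by move: hn; rewrite leqn0 cards_eq0 => /eqP/setP/(_ B); rewrite !inE BS.
have sub' : B |: S \subset Dp.
  by apply/subsetP => Y; rewrite in_setU1 => /orP [/eqP ->|/(subsetP sub) //]; rewrite /Dp !inE BC BD.
have hn' : #|~: (B |: S)| <= n.
  move: hn; rewrite (cardsD1 B (~: S)) inE BS add1n ltnS; apply: leq_trans.
  by apply: subset_leq_card; apply/subsetP => Y; rewrite !inE negb_or andbC.
have hI' : 2 * #|B |: S| <= #|LS (B |: S)| + 2.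
  have csub : cover S \subset cover (B |: S) by apply: cover_sub; apply: subsetUr.
  have sxS' : s x \in cover (B |: S) by apply/bigcupP; exists B; rewrite ?setU11.
  have xS' : x \in cover (B |: S) by apply: (subsetP csub).
  have : x |: (s x |: LS S) \subset LS (B |: S).
    apply/subsetP => y; rewrite !inE => /or3P [/eqP ->|/eqP ->|/andP [yS syS]].
    + by rewrite xS' sxS'.
    + by rewrite sxS' sK xS'.
    + by rewrite !(subsetP csub).
  have hx1 : x \notin s x |: LS S.
    by rewrite !inE negb_or eq_sym sF /= (negbTE sxS) andbF.
  have hx2 : s x \notin LS S by rewrite inE (negbTE sxS) ?andbF.
  move/subset_leq_card; rewrite !cardsU1 hx1 hx2 BS /=.
  move: hI; move: #|LS S| #|S| #|LS (B |: S)| => a b c.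
  exact: arith1.
have [S' [h1 h2 h3 h4]] := IH (B |: S) hn' sub' hI'.
by exists S'; split => //; apply: subset_trans h1; apply: subsetUr.
Qed.


Variables (m : nat) (vs : 'I_m -> V) (es : 'I_m -> E).
Hypotheses (m3 : 2 < m) (vinj : injective vs) (einj : injective es)
  (Cdef : C = [set es i | i in 'I_m])
  (hj : forall i, joins ends (es i) (vs i) (vs (ordS i))).

Lemma kes i : key ends (es i) = [set vs i; vs (ordS i)].
Proof. exact: joins_key (hj i). Qed.

Lemma sesC i : s (es i) \notin C.
Proof.
apply/negP; rewrite Cdef => /imsetP [j _ hj'].
have k := congr1 (key ends) hj'; rewrite sk !kes in k.
have : vs j \in [set vs i; vs (ordS i)] by rewrite k set21.
rewrite !inE !(inj_eq vinj) => /orP [/eqP ji | /eqP ji].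
  by move: (sF (es i)); rewrite hj' ji eqxx.
have : vs (ordS j) \in [set vs i; vs (ordS i)] by rewrite k set22.
rewrite !inE !(inj_eq vinj) ji => /orP [/eqP h | /eqP h].
  by move: (ordSS_neq i m3); rewrite h eqxx.
by move: (ordS_neq (ordS i) (ltnW m3)); rewrite h eqxx.
Qed.

Lemma esC i : es i \in C.
Proof. by rewrite Cdef; apply/imsetP; exists i. Qed.

Lemma subDp (S : {set {set E}}) : S \subset Dp -> S \subset D.
Proof. by move=> h; apply: subset_trans h _; apply: subsetDl. Qed.

Lemma prop (S : {set {set E}}) i : S \subset Dp -> closedb S ->
  s (es i) \in cover S -> s (es (ordS i)) \in cover S.
Proof.
move=> sub hc hi; apply/negPn/negP => hn.
have eT := deg_even (vs (ordS i)) (subDp sub).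
have hLS : ~~ odd #|(cover S :&: Xw (vs (ordS i))) :&: LS S|.
  apply: even_inv => x; rewrite !inE => /andP [/andP [xS xw] /andP [_ sxS]].
  have k2 : vs (ordS i) \in key ends (s x) by rewrite sk inkey.
  by rewrite sxS -inkey k2 sK xS.
have hD : (cover S :&: Xw (vs (ordS i))) :\: LS S = [set s (es i)].
  apply/setP => x; rewrite !inE; apply/idP/idP.
  - case/andP => hnl /andP [xS xw]; rewrite xS /= in hnl.
    have := forallP hc x; rewrite xS /= => /implyP hcl.
    have sxC : s x \in C.
      by case: (boolP (s x \in C)) => // h; rewrite (hcl h) in hnl.
    move: sxC; rewrite Cdef => /imsetP [j _ ej].
    have ex : x = s (es j) by rewrite -ej sK.
    move: xw; rewrite -inkey -sk ej kes !inE !(inj_eq vinj) => /orP [/eqP e1 | /eqP e1].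
      by move: hn; rewrite e1 -ex xS.
    by rewrite ex (ordS_inj e1) eqxx.
  - move/eqP => ->; rewrite sK hi /= -inkey sk kes set22 andbT.
    by apply/negP => /(notC sub); rewrite esC.
have := cardsID (LS S) (cover S :&: Xw (vs (ordS i))).
rewrite hD cards1 => e.
by move: eT; rewrite -e oddD (negbTE hLS).
Qed.

Lemma sum_ge2 (P : pred {set E}) : (forall B, P B -> B \in D) ->
  2 * (\sum_(B | P B) 1) <= \sum_(B | P B) #|B|.
Proof.
move=> h; rewrite mul2n -addnn -big_split /=; apply: leq_sum => B /h BD.
by rewrite addn1; apply: cycle_card; apply: HDc.
Qed.

Lemma bound : 2 * #|D| + 2 * m <= #|E| + 4.
Proof.
have m0 : 0 < m by apply: leq_trans m3.
pose i0 : 'I_m := Ordinal m0.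
set x0 := s (es i0).
have x0C : x0 \notin C := sesC i0.
have x0D : x0 \in cover D by rewrite covD inE.
set B0 := pblock D x0.
have B0D : B0 \in D by apply: pblock_mem.
have x0B0 : x0 \in B0 by rewrite mem_pblock.
have B0C : B0 != C by apply: contraNneq x0C => <-.
have sub0 : [set B0] \subset Dp by rewrite sub1set /Dp !inE B0C B0D.
have hI0 : 2 * #|[set B0]| <= #|LS [set B0]| + 2 by rewrite cards1 muln1 leq_addl.
have [S [h1 h2 h3 h4]] := @grow #|~: [set B0]| [set B0] (leqnn _) sub0 hI0.
have hx0 : x0 \in cover S.
  by apply/bigcupP; exists B0 => //; apply: (subsetP h1); rewrite set11.
have hall : forall i, s (es i) \in cover S.
  have hk : forall k, s (es (iter k (@ordS m) i0)) \in cover S.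
    elim => [|k IH] //=; exact: prop.
  move=> i; have -> : i = iter i (@ordS m) i0.
    by apply: ord_inj; rewrite iter_ordS // modn_small.
  exact: hk.
have sinj : injective s := can_inj sK.
have hcard : #|LS S| + m <= #|cover S|.
  have -> : m = #|s @: C| by rewrite card_imset // Cdef card_imset // card_ord.
  have dj : LS S :&: s @: C = set0.
    apply/setP => x; rewrite !inE; apply/negbTE/negP => /andP [/andP [_ sxS] /imsetP [c cC ec]].
    by move: (notC h2 sxS); rewrite ec sK cC.
  have -> : #|LS S| + #|s @: C| = #|LS S :|: s @: C| by rewrite cardsU dj cards0 subn0.
  apply: subset_leq_card.
  apply/subsetP => x; rewrite !inE => /orP [/andP [] //|/imsetP [c cC ->]].
  by move: cC; rewrite Cdef => /imsetP [j _ ->]; apply: hall.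
have hsub := subDp h2.
have eE : #|E| = \sum_(B in D) #|B| by rewrite -cardsT; apply: card_partition.
have eD : #|D| = \sum_(B in D) 1 by rewrite sum1_card.
have CS : C \notin S by apply/negP => /(subsetP h2); rewrite /Dp !inE eqxx.
rewrite (bigID (fun B => B \in S)) /= in eE.
rewrite (bigID (fun B => B \in S)) /= in eD.
have e1 : \sum_(B in D | B \in S) #|B| = #|cover S|.
  rewrite card_cover //; apply: eq_bigl => B; apply/andP/idP => [[]//|BS].
  by rewrite (subsetP hsub).
have e2 : \sum_(B in D | B \in S) 1 = #|S|.
  rewrite -sum1_card; apply: eq_bigl => B; apply/andP/idP => [[]//|BS].
  by rewrite (subsetP hsub).
rewrite e1 in eE; rewrite e2 in eD.
rewrite (bigD1 C) /= in eE; last by rewrite HC CS.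
rewrite (bigD1 C) /= in eD; last by rewrite HC CS.
have hr := @sum_ge2 (fun B => (B \in D) && (B \notin S) && (B != C))
  (fun B => fun h => proj1 (andP (proj1 (andP h)))).
have cC : #|C| = m by rewrite Cdef card_imset // card_ord.
rewrite cC in eE.
move: eE eD hr hcard h4.
move: (\sum_(i | (i \in D) && (i \notin S) && (i != C)) 1) => r1.
move: (\sum_(i | (i \in D) && (i \notin S) && (i != C)) #|i|) => r2.
move=> -> ->; exact: arith2.
Qed.

End Main.

Theorem mainTheorem6 (V E : finType) (ends : E -> V * V)
  (Hloop : loopless ends) (Heven : even_multiplicity ends)
  (D : {set {set E}}) (HD : cycle_decomposition ends D)
  (C : {set E}) (HC : C \in D) :
  2 * #|D| + 2 * #|C| <= #|E| + 4.
Proof.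
have [s [sK sF sk]] := sigma_exists Hloop Heven.
case: HD => HDc HDp.
have [m [vs [es [m1 vinj einj Cdef hj]]]] := HDc C HC.
have cC : #|C| = m by rewrite Cdef card_imset // card_ord.
case: (ltnP 2 m) => hm.
  by rewrite cC; exact: (bound HDc HDp sK sF sk HC hm vinj einj Cdef hj).
have eE : #|E| = \sum_(B in D) #|B| by rewrite -cardsT; apply: card_partition.
have eD : #|D| = \sum_(B in D) 1 by rewrite sum1_card.
have := @sum_ge2 _ _ _ _ HDc (fun B => B \in D) (fun B h => h).
rewrite -eE -eD cC; move: hm; move: #|D| #|E| => a b.
exact: arith3.
Qed.
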